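(* Let $q$ be an even prime power (a power of $2$), $m,n\ge1$, let $\mathscr{C}\subseteq\mathrm{GF}(q^m)^n$ be a scalable code and let $\mathscr{B}$ be a basis of $\mathrm{GF}(q^m)$ over $\mathrm{GF}(q)$. If $\mathrm{Im}_{\mathscr{B}}(\mathscr{C})\subseteq\mathrm{GF}(q)^{mn}$ is self-orthogonal w.r.t. the canonical inner product $\sum_{i=1}^{mn}x_iy_i$, then $\mathscr{C}$ is self-orthogonal w.r.t. the canonical inner product $\sum_{i=1}^n x_iy_i$ on $\mathrm{GF}(q^m)^n$.
   Context: $\mathrm{Tr}:\mathrm{GF}(q^m)\to\mathrm{GF}(q)$, $\mathrm{Tr}(a)=\sum_{i=0}^{m-1}a^{q^i}$. The dual basis of a basis $\{\gamma_1,\ldots,\gamma_m\}$ is the unique basis $\{\beta_1,\ldots,\beta_m\}$ with $\mathrm{Tr}(\gamma_i\beta_j)=\delta_{ij}$. A code $\mathscr{C}\subseteq\mathrm{GF}(q^m)^n$ is scalable if $x\in\mathscr{C}\Rightarrow\alpha x\in\mathscr{C}$ for all $\alpha\in\mathrm{GF}(q^m)$. For a basis $\mathscr{B}$ with dual basis $\{\beta_1,\ldots,\beta_m\}$, $\mathrm{Im}_{\mathscr{B}}(\mathscr{C})=\{(\mathrm{Tr}(\beta_1x_1),\ldots,\mathrm{Tr}(\beta_1x_n),\ldots,\mathrm{Tr}(\beta_mx_1),\ldots,\mathrm{Tr}(\beta_mx_n)):x\in\mathscr{C}\}$. A code $D$ is self-orthogonal w.r.t. a form $g$ if $g(x,y)=0$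 for all $x,y\in D$. *)

(* Defs.v *)
From HB Require Import structures.
From mathcomp Require Import all_boot all_order all_algebra all_field.
Set Implicit Arguments. Unset Strict Implicit. Unset Printing Implicit Defensive.
Import GRing.Theory.
Local Open Scope ring_scope.

(* GF(q) is modelled by a finite field F (q = #|F|), GF(q^m) by a finite
   dimensional field extension L of F, with m = \dim {:L}. *)

(* Trace Tr : GF(q^m) -> GF(q), Tr a = sum_{i<m} a^(q^i), valued in L
   (its values lie in the image of F). *)
Definition Tr (F : finFieldType) (L : fieldExtType F) (a : L) : L :=
  \sum_(i < \dim {:L}) a ^+ (#|F| ^ i)%N.

Definition is_dual_basis (F : finFieldType) (L : fieldExtType F)
    (gam : (\dim {:L}).-tuple L) (beta : (\dim {:L}).-tuple L) : Prop :=
  basis_of fullv beta /\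
  forall i j : 'I_(\dim {:L}),
    Tr (tnth gam i * tnth beta j) = (i == j)%:R.

Definition scalable_code (F : finFieldType) (L : fieldExtType F) (n : nat)
    (C : 'rV[L]_n -> Prop) : Prop :=
  forall (x : 'rV[L]_n) (a : L), C x -> C (a *: x).

(* Im_B(C) is self-orthogonal w.r.t. the canonical inner product on GF(q)^{mn};
   the coordinates Tr(beta_i x_j) are computed in L. *)
Definition image_self_orthogonal (F : finFieldType) (L : fieldExtType F)
    (n : nat) (beta : (\dim {:L}).-tuple L) (C : 'rV[L]_n -> Prop) : Prop :=
  forall x y : 'rV[L]_n, C x -> C y ->
    \sum_(i < \dim {:L}) \sum_(j < n)
      Tr (tnth beta i * x ord0 j) * Tr (tnth beta i * y ord0 j) = 0.

Definition self_orthogonal (F : finFieldType) (L : fieldExtType F)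
    (n : nat) (C : 'rV[L]_n -> Prop) : Prop :=
  forall x y : 'rV[L]_n, C x -> C y -> \sum_(j < n) x ord0 j * y ord0 j = 0.

(* Main.v *)
Require Import Defs.
From mathcomp Require Import all_boot all_order all_algebra all_field.
Set Implicit Arguments. Unset Strict Implicit. Unset Printing Implicit Defensive.
Import GRing.Theory.
Local Open Scope ring_scope.

Lemma dimL_gt0 (F : finFieldType) (L : fieldExtType F) : (0 < \dim {:L})%N.
Proof.
rewrite lt0n dimv_eq0; apply/eqP=> h.
have := memvf (1 : L); rewrite h memv0 oner_eq0 //.
Qed.

Lemma key (F : finFieldType) (L : fieldExtType F) (c : nat -> L) :
  (forall a : L, \sum_(k < \dim {:L}) c k * a ^+ (#|F| ^ k)%N = 0) -> c 0%N = 0.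
Proof.
move=> H.
have m0 := dimL_gt0 L.
move: H; set m := \dim {:L}; set q := #|F| => H.
have q1 : (1 < q)%N := finNzRing_gt1 F.
have m1 : (0 < m)%N := m0.
pose P : {poly L} := \sum_(k < m) c k *: 'X^(q ^ k).
have coefP j : P`_j = \sum_(k < m) c k * (j == q ^ k)%N%:R.
  by rewrite /P coef_sum; apply: eq_bigr => k _; rewrite coefZ coefXn.
have P0 : P = 0.
  apply/eqP; apply/negPn/negP => nz.
  have szP : (size P <= (q ^ m.-1).+1)%N.
    apply/leq_sizeP => j hj; rewrite coefP big1 // => k _.
    have : (j != q ^ k)%N.
      apply/eqP => e; move: hj; rewrite e ltnNge => /negP; apply.
      by rewrite leq_exp2l // -ltnS prednK.
    by move=> /negbTE ->; rewrite mulr0.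
  have rt : all (root P) (enum (finvect_type L) : seq L).
    apply/allP => a _; rewrite /root horner_sum; apply/eqP.
    rewrite -[RHS](H a); apply: eq_bigr => k _; by rewrite hornerZ hornerXn.
  have := max_poly_roots nz rt (enum_uniq _).
  have -> : size (enum (finvect_type L) : seq L) = #|finvect_type L| by rewrite cardE.
  have -> : #|finvect_type L| = (q ^ m)%N.
    by have := card_vspacef (Vector.class (finvect_type L)); move=> <-; rewrite card_vspace.
  move=> h; have := leq_trans h szP; rewrite ltnS.
  by rewrite -{1}(prednK m1) expnS leqNgt ltn_Pmull // expn_gt0 (ltnW q1).
have := coefP 1%N; rewrite P0 coef0 => /esym.
rewrite -(prednK m1) big_ord_recl /= mulr1 big1 ?addr0 // => k _.
rewrite eq_sym (_ : (q ^ (bump 0 k) == 1)%N = false) ?mulr0 //.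
apply/negbTE; rewrite /bump /= add1n expnS.
by rewrite muln_eq1; apply/negP => /andP[/eqP e _]; rewrite e in q1.
Qed.

Lemma expand (F : finFieldType) (L : fieldExtType F) (D n : nat)
  (u t : 'I_D -> 'I_n -> L) (a : L) :
  \sum_(i < D) \sum_(j < n) Tr (u i j * a) * t i j =
  \sum_(k < \dim {:L}) (\sum_(i < D) \sum_(j < n) u i j ^+ (#|F| ^ k)%N * t i j) * a ^+ (#|F| ^ k)%N.
Proof.
rewrite /Tr.
under eq_bigr do under eq_bigr do rewrite big_distrl.
under eq_bigr do rewrite exchange_big.
rewrite exchange_big; apply: eq_bigr => k _.
rewrite big_distrl; apply: eq_bigr => i _.
rewrite big_distrl; apply: eq_bigr => j _.
by rewrite exprMn /= mulrAC.
Qed.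

Theorem proposition2 (F : finFieldType) (L : fieldExtType F) (n : nat)
    (C : 'rV[L]_n -> Prop) (gam beta : (\dim {:L}).-tuple L) :
  (2 \in [pchar F])%N ->
  (0 < n)%N ->
  @scalable_code F L n C ->
  basis_of fullv gam ->
  @is_dual_basis F L gam beta ->
  @image_self_orthogonal F L n beta C ->
  @self_orthogonal F L n C.
Proof.
move=> ch2 _ scal _ [Hb _] Himg x y Cx Cy.
have S1 : forall v, C v ->
    \sum_(i < \dim {:L}) \sum_(j < n) Tr (tnth beta i * v ord0 j) * (tnth beta i * x ord0 j) = 0.
  move=> v Cv.
  have h := @key F L (fun k => \sum_(i < \dim {:L}) \sum_(j < n)
     (tnth beta i * x ord0 j) ^+ (#|F| ^ k)%N * Tr (tnth beta i * v ord0 j)).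
  rewrite /= expn0 in h; rewrite -[RHS]h; last first.
    move=> a; rewrite -expand -[RHS](Himg (a *: x) v (scal x a Cx) Cv).
    apply: eq_bigr => i _; apply: eq_bigr => j _.
    by rewrite mxE [a * _]mulrC mulrA.
  apply: eq_bigr => i _; apply: eq_bigr => j _; by rewrite expr1 mulrC.
have S2 : \sum_(i < \dim {:L}) \sum_(j < n) (tnth beta i * y ord0 j) * (tnth beta i * x ord0 j) = 0.
  have h := @key F L (fun k => \sum_(i < \dim {:L}) \sum_(j < n)
     (tnth beta i * y ord0 j) ^+ (#|F| ^ k)%N * (tnth beta i * x ord0 j)).
  rewrite /= expn0 in h; rewrite -[RHS]h; last first.
    move=> b; rewrite -expand -[RHS](S1 (b *: y) (scal y b Cy)).
    apply: eq_bigr => i _; apply: eq_bigr => j _.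
    by rewrite mxE; congr (Tr _ * _); rewrite [RHS]mulrCA mulrC.
  apply: eq_bigr => i _; apply: eq_bigr => j _; by rewrite expr1.
have chL : 2%N \in [pchar L] by rewrite (pchar_lalg L).
have : (\sum_(i < \dim {:L}) tnth beta i) ^+ 2 * \sum_(j < n) x ord0 j * y ord0 j = 0.
  rewrite -[RHS]S2 -(pFrobenius_autE chL (\sum_(i < \dim {:L}) tnth beta i)) rmorph_sum mulr_suml; apply: eq_bigr => i _.
  rewrite [X in X * _](_ : _ = tnth beta i ^+ 2); last exact: pFrobenius_autE.
  rewrite mulr_sumr; apply: eq_bigr => j _.
  by rewrite expr2 mulrACA mulrC.
move/eqP; rewrite mulf_eq0 => /orP[|/eqP //].
rewrite expf_eq0 /= => /eqP hs; exfalso.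
have fr := basis_free Hb.
have m1 : (0 < \dim {:L})%N := dimL_gt0 L.
have := (freeP fr) (fun _ => 1) _ (Ordinal m1).
rewrite -[RHS]hs => h.
suff e : \sum_(i < \dim {:L}) 1 *: beta`_i = \sum_(i < \dim {:L}) tnth beta i.
  by move: (h e) => /eqP; rewrite oner_eq0.
by apply: eq_bigr => i _; rewrite scale1r -tnth_nth.
Qed.
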